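(* Let $Q=(q_n)_{n\ge1}$ be a basic sequence that is infinite in limit, and let $F$ be a $Q$-special sequence. Then $x_F$ is $Q$-distribution normal, i.e. the sequence $\left(q_1q_2\cdots q_n x_F \bmod 1\right)_{n=0}^{\infty}$ is uniformly distributed in $[0,1)$.
   Context: A basic sequence is a sequence $Q=(q_n)_{n\ge1}$ of integers with $q_n\ge 2$; it is infinite in limit if $q_n\to\infty$. $\mathbb{N}$ denotes the positive integers. For each positive integer $j$ let $\nu_j=\min\{N : q_m\ge 2j^2 \text{ for all } m\ge N\}$. Define $l_1=\max(\nu_2-1,1)$ and, recursively for $i\ge 2$, $l_i=\max\big(\min\{k\in\mathbb{N} : l_1+2l_2+\cdots+(i-1)l_{i-1}+ik\ge \nu_{i+1}-1\},1\big)$. Put $L_i=\sum_{j=1}^i jl_j$ (with $L_0=0$). Let $S_Q=\{(a,b,c)\in\mathbb{N}^3 : b\le l_a,\ c\le a\}$ and $\phi_Q(a,b,c)=L_{a-1}+(b-1)a+c$; $\phi_Q$ is a bijection $S_Q\to\mathbb{N}$. A $Q$-special sequence is a family of integers $F=(F_{(a,b,c)})_{(a,b,c)\in S_Q}$ with $F_{(a,b,1)}=0$ for all $(a,b,1)\in S_Q$ and $\frac{F_{(a,b,c)}}{q_{\phi_Q(a,b,c)}}\in\left[\frac{c-1}{a}-\frac{1}{2a^2},\frac{c-1}{a}+\frac{1}{2a^2}\right]$ for $(a,b,c)\in S_Q$ with $c>1$. For such $F$ put $E_{F,n}=F_{\phi_Q^{-1}(n)}$ and $x_F=\sum_{n=1}^\infty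 \frac{E_{F,n}}{q_1q_2\cdots q_n}$. *)

(* Defs.v *)
From Stdlib Require Import Reals Lra Lia Arith ZArith ClassicalEpsilon.
From Coquelicot Require Import Coquelicot.
Open Scope R_scope.

(* A basic sequence is q : nat -> nat, indexed from 1 (q 0 is unused). *)
Definition basic_sequence (q : nat -> nat) : Prop :=
  forall n : nat, (1 <= n)%nat -> (2 <= q n)%nat.

Definition infinite_in_limit (q : nat -> nat) : Prop :=
  forall M : nat, exists N : nat, forall n : nat, (N <= n)%nat -> (M <= q n)%nat.

(* Least natural number satisfying P (meaningful when P is inhabited). *)
Definition minN (P : nat -> Prop) : nat :=
  epsilon (inhabits 0%nat) (fun n => P n /\ forall m, P m -> (n <= m)%nat).

Definition nu (q : nat -> nat) (j : nat) : nat :=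
  minN (fun N => (1 <= N)%nat /\ forall m, (N <= m)%nat -> (2 * j * j <= q m)%nat).

Fixpoint lL (q : nat -> nat) (i : nat) : nat * nat :=
  match i with
  | O => (0%nat, 0%nat)
  | S i' =>
      let Lprev := snd (lL q i') in
      let li :=
        match i' with
        | O => Nat.max (nu q 2 - 1) 1
        | _ => Nat.max
                 (minN (fun k => (1 <= k)%nat /\ (nu q (i + 1) - 1 <= Lprev + i * k)%nat))
                 1
        end in
      (li, (Lprev + i * li)%nat)
  end.

Definition l_seq (q : nat -> nat) (i : nat) : nat := fst (lL q i).
Definition L_seq (q : nat -> nat) (i : nat) : nat := snd (lL q i).

Definition in_SQ (q : nat -> nat) (a b c : nat) : Prop :=
  (1 <= a)%nat /\ (1 <= b)%nat /\ (1 <= c)%nat /\ (b <= l_seq q a)%nat /\ (c <= a)%nat.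

Definition phiQ (q : nat -> nat) (a b c : nat) : nat :=
  (L_seq q (a - 1) + (b - 1) * a + c)%nat.

Definition phiQ_inv (q : nat -> nat) (n : nat) : nat * nat * nat :=
  epsilon (inhabits (0%nat, 0%nat, 0%nat))
    (fun t => let '(a, b, c) := t in in_SQ q a b c /\ phiQ q a b c = n).

(* Q-special sequence F : (a,b,c) |-> integer (values off S_Q irrelevant). *)
Definition Q_special (q : nat -> nat) (F : nat -> nat -> nat -> Z) : Prop :=
  forall a b c : nat, in_SQ q a b c ->
    (c = 1%nat -> F a b c = 0%Z) /\
    ((1 < c)%nat ->
       INR (c - 1) / INR a - 1 / (2 * INR a ^ 2)
         <= IZR (F a b c) / INR (q (phiQ q a b c))
       /\ IZR (F a b c) / INR (q (phiQ q a b c))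
         <= INR (c - 1) / INR a + 1 / (2 * INR a ^ 2)).

Definition E_F (q : nat -> nat) (F : nat -> nat -> nat -> Z) (n : nat) : Z :=
  let '(a, b, c) := phiQ_inv q n in F a b c.

Fixpoint qprod (q : nat -> nat) (n : nat) : R :=
  match n with
  | O => 1
  | S n' => qprod q n' * INR (q n)
  end.

Definition x_F (q : nat -> nat) (F : nat -> nat -> nat -> Z) : R :=
  Series (fun k => IZR (E_F q F (S k)) / qprod q (S k)).

Fixpoint count_in (y : nat -> R) (a b : R) (N : nat) : nat :=
  match N with
  | O => O
  | S N' => (count_in y a b N' +
             (if Rle_dec a (y N') then if Rlt_dec (y N') b then 1 else 0 else 0))%nat
  end.

Definition uniformly_distributed (y : nat -> R) : Prop :=
  forall a b : R, 0 <= a -> a < b -> b <= 1 ->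
    is_lim_seq (fun N => INR (count_in y a b N) / INR N) (b - a).

Definition Q_distribution_normal (q : nat -> nat) (x : R) : Prop :=
  uniformly_distributed (fun n => frac_part (qprod q n * x)).

(* Main.v *)
Require Import Defs.
From Stdlib Require Import Reals ZArith Lra Lia Arith Classical ClassicalEpsilon.
From Coquelicot Require Import Coquelicot.
Open Scope R_scope.


Lemma least_exists (P : nat -> Prop) n : P n -> exists k, P k /\ forall m, P m -> (k <= m)%nat.
Proof.
  induction n as [n IH] using lt_wf_ind. intros Hn.
  destruct (classic (exists m, (m < n)%nat /\ P m)) as [[m [Hm Pm]]|Hno].
  - exact (IH m Hm Pm).
  - exists n. split; auto. intros m Pm. destruct (le_lt_dec n m); auto.
    exfalso; apply Hno; eauto.
Qed.

Lemma minN_spec (P : nat -> Prop) : (exists n, P n) -> P (minN P) /\ forall m, P m -> (minN P <= m)%nat.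
Proof.
  intros [n Hn]. unfold minN. apply epsilon_spec. apply (least_exists P n Hn).
Qed.

Lemma nu_spec q j : infinite_in_limit q ->
  (1 <= nu q j)%nat /\ (forall m, (nu q j <= m)%nat -> (2 * j * j <= q m)%nat).
Proof.
  intros Hinf. unfold nu.
  destruct (minN_spec (fun N => (1 <= N)%nat /\ forall m, (N <= m)%nat -> (2 * j * j <= q m)%nat)) as [H _].
  - destruct (Hinf (2*j*j)%nat) as [N HN]. exists (Nat.max 1 N). split; [lia|].
    intros m Hm. apply HN. lia.
  - exact H.
Qed.

Lemma nu1 q : basic_sequence q -> (nu q 1 <= 1)%nat.
Proof.
  intros Hb. unfold nu.
  destruct (minN_spec (fun N => (1 <= N)%nat /\ forall m, (N <= m)%nat -> (2 * 1 * 1 <= q m)%nat)) as [_ H].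
  - exists 1%nat. split; [lia|]. intros m Hm. specialize (Hb m Hm). lia.
  - apply H. split; [lia|]. intros m Hm. specialize (Hb m Hm). lia.
Qed.

Lemma L_0 q : L_seq q 0 = 0%nat.
Proof. reflexivity. Qed.

Lemma L_S q i : L_seq q (S i) = (L_seq q i + S i * l_seq q (S i))%nat.
Proof. reflexivity. Qed.

Lemma l_1 q : l_seq q 1 = Nat.max (nu q 2 - 1) 1.
Proof. reflexivity. Qed.

Lemma l_SS q i : l_seq q (S (S i)) = Nat.max
   (minN (fun k => (1 <= k)%nat /\ (nu q (S (S i) + 1) - 1 <= L_seq q (S i) + S (S i) * k)%nat)) 1.
Proof. reflexivity. Qed.

Lemma l_pos q i : (1 <= l_seq q (S i))%nat.
Proof. destruct i; [rewrite l_1 | rewrite l_SS]; lia. Qed.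

Lemma L_nu q i : basic_sequence q -> infinite_in_limit q -> (nu q (S i) - 1 <= L_seq q i)%nat.
Proof.
  intros Hb Hinf. destruct i as [|i].
  - rewrite L_0. pose proof (nu1 q Hb). lia.
  - destruct i as [|i].
    + rewrite L_S, L_0, l_1. lia.
    + rewrite L_S, l_SS.
      destruct (minN_spec (fun k => (1 <= k)%nat /\ (nu q (S (S i) + 1) - 1 <= L_seq q (S i) + S (S i) * k)%nat)) as [[_ H] _].
      * exists (nu q (S (S i) + 1)). split. apply (nu_spec q _ Hinf). nia.
      * replace (S (S (S i))) with (S (S i) + 1)%nat by lia. nia.
Qed.

Lemma q_big q a m : basic_sequence q -> infinite_in_limit q -> (1 <= a)%nat ->
  (L_seq q (a - 1) < m)%nat -> (2 * a * a <= q m)%nat.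
Proof.
  intros Hb Hinf Ha Hm. destruct a as [|a]; [lia|].
  pose proof (L_nu q a Hb Hinf). replace (S a - 1)%nat with a in Hm by lia.
  apply (nu_spec q (S a) Hinf). lia.
Qed.

Lemma L_mono q i j : (i < j)%nat -> (L_seq q i < L_seq q j)%nat.
Proof.
  induction j; intros H; [lia|]. rewrite L_S. pose proof (l_pos q j).
  destruct (Nat.eq_dec i j); [subst; nia|]. specialize (IHj ltac:(lia)). nia.
Qed.

Lemma L_ge q i : (i * (i + 1) <= 2 * L_seq q i)%nat.
Proof.
  induction i; [simpl; lia|]. rewrite L_S. pose proof (l_pos q i). nia.
Qed.

Lemma phi_range q a b c : in_SQ q a b c ->
  (L_seq q (a - 1) < phiQ q a b c <= L_seq q a)%nat.
Proof.
  unfold in_SQ, phiQ. intros (Ha & Hb & Hc & Hbl & Hca).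
  destruct a as [|a]; [lia|]. rewrite L_S. replace (S a - 1)%nat with a by lia.
  assert ((b - 1) * S a <= (l_seq q (S a) - 1) * S a)%nat by (apply Nat.mul_le_mono_r; lia).
  nia.
Qed.

Lemma SQ_unique q a b c a' b' c' : in_SQ q a b c -> in_SQ q a' b' c' ->
  phiQ q a b c = phiQ q a' b' c' -> a = a' /\ b = b' /\ c = c'.
Proof.
  intros H H' E. pose proof (phi_range q a b c H) as R. pose proof (phi_range q a' b' c' H') as R'.
  assert (a = a').
  { destruct (lt_eq_lt_dec a a') as [[Hlt|]|Hlt]; auto; exfalso.
    - assert (L_seq q a <= L_seq q (a' - 1))%nat.
      { destruct (Nat.eq_dec a (a'-1)). rewrite e; lia. apply Nat.lt_le_incl, L_mono. destruct H as [? _]. lia. }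
      lia.
    - assert (L_seq q a' <= L_seq q (a - 1))%nat.
      { destruct (Nat.eq_dec a' (a-1)). rewrite e; lia. apply Nat.lt_le_incl, L_mono. destruct H' as [? _]. lia. }
      lia. }
  subst a'. unfold phiQ in E. unfold in_SQ in H, H'.
  assert (E2 : ((b - 1) * a + c = (b' - 1) * a + c')%nat) by lia.
  assert (b = b').
  { destruct (lt_eq_lt_dec b b') as [[Hlt|]|Hlt]; auto; exfalso.
    - assert ((b - 1) * a + a <= (b' - 1) * a)%nat by nia. lia.
    - assert ((b' - 1) * a + a <= (b - 1) * a)%nat by nia. lia. }
  subst; lia.
Qed.

Lemma block_exists q i m : (1 <= m <= L_seq q i)%nat ->
  exists a, (1 <= a <= i)%nat /\ (L_seq q (a - 1) < m <= L_seq q a)%nat.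
Proof.
  induction i; intros H; [rewrite L_0 in H; lia|].
  destruct (le_lt_dec m (L_seq q i)).
  - destruct IHi as [a Ha]; [lia|]. exists a; lia.
  - exists (S i). replace (S i - 1)%nat with i by lia. lia.
Qed.

Lemma SQ_exists q m : (1 <= m)%nat -> exists a b c, in_SQ q a b c /\ phiQ q a b c = m.
Proof.
  intros Hm. destruct (block_exists q m m) as [a [Ha Hr]].
  { split; auto. pose proof (L_ge q m). nia. }
  destruct a as [|a]; [lia|]. rewrite L_S in Hr. replace (S a - 1)%nat with a in Hr by lia.
  set (r := (m - L_seq q a - 1)%nat).
  assert (Hr2 : (r < S a * l_seq q (S a))%nat) by (unfold r; lia).
  exists (S a), (r / S a + 1)%nat, (r mod S a + 1)%nat. split.
  - unfold in_SQ. pose proof (Nat.mod_upper_bound r (S a) ltac:(lia)).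
    assert (r / S a < l_seq q (S a))%nat by (apply Nat.Div0.div_lt_upper_bound; lia).
    lia.
  - unfold phiQ. replace (S a - 1)%nat with a by lia.
    pose proof (Nat.div_mod_eq r (S a)). replace (r / S a + 1 - 1)%nat with (r / S a)%nat by lia.
    unfold r in *. nia.
Qed.

Lemma E_eq q F a b c : in_SQ q a b c -> E_F q F (phiQ q a b c) = F a b c.
Proof.
  intros H. unfold E_F, phiQ_inv.
  set (P := fun t : nat * nat * nat => let '(a0, b0, c0) := t in in_SQ q a0 b0 c0 /\ phiQ q a0 b0 c0 = phiQ q a b c).
  assert (Ht : P (epsilon (inhabits (0%nat, 0%nat, 0%nat)) P)).
  { apply epsilon_spec. exists (a, b, c). simpl. auto. }
  destruct (epsilon (inhabits (0%nat, 0%nat, 0%nat)) P) as [[a0 b0] c0].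
  destruct Ht as [H0 E0]. destruct (SQ_unique q a0 b0 c0 a b c H0 H E0) as (-> & -> & ->). reflexivity.
Qed.

Lemma r_bounds q F a b c : basic_sequence q -> infinite_in_limit q -> Q_special q F -> in_SQ q a b c ->
  let Q := INR (q (phiQ q a b c)) in let E := IZR (E_F q F (phiQ q a b c)) in
  0 <= E <= Q - 2 /\
  INR (c - 1) / INR a - 1 / (2 * INR a ^ 2) <= E / Q <= INR (c - 1) / INR a + 1 / (2 * INR a ^ 2).
Proof.
  intros Hb Hinf HF H Q E. unfold E; rewrite E_eq by exact H.
  pose proof (phi_range q a b c H) as R.
  destruct H as (Ha & Hbb & Hc & Hbl & Hca).
  pose proof (q_big q a (phiQ q a b c) Hb Hinf Ha ltac:(lia)) as Hq.
  assert (HQ : 2 * INR a * INR a <= Q).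
  { unfold Q. replace 2 with (INR 2) by reflexivity. rewrite <- !mult_INR. apply le_INR. exact Hq. }
  assert (Ha' : 1 <= INR a) by (apply (le_INR 1); lia).
  assert (HQp : 0 < Q) by nra.
  destruct (HF a b c ltac:(unfold in_SQ; lia)) as [H1 H2].
  destruct (Nat.eq_dec c 1) as [->|Hc1].
  - rewrite H1 by reflexivity. simpl (INR (1-1)). 
    assert (0 < 1 / (2 * INR a ^2)). { apply Rdiv_lt_0_compat; nra. }
    replace (0 / INR a) with 0 by (field; lra). replace (IZR 0 / Q) with 0 by (simpl; field; lra).
    split; [simpl; split; nra|]. lra.
  - destruct (H2 ltac:(lia)) as [Lo Hi]. fold Q in Lo, Hi. split; [|split; auto].
    set (e := IZR (F a b c)) in *.
    assert (Hc1r : INR (c - 1) <= INR a - 1).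
    { rewrite minus_INR by lia. simpl. apply Rplus_le_compat_r, le_INR. exact Hca. }
    assert (Hc1p : 1 <= INR (c - 1)) by (apply (le_INR 1); lia).
    assert (Ha2 : 2 <= INR a) by (apply (le_INR 2); lia).
    assert (Hd : 1 / INR a - 1 / (2 * INR a ^ 2) > 0).
    { replace (1 / INR a - 1 / (2 * INR a ^ 2)) with ((2 * INR a - 1) / (2 * INR a ^ 2)) by (field; lra).
      apply Rdiv_lt_0_compat; nra. }
    assert (INR (c-1) / INR a >= 1 / INR a).
    { unfold Rdiv. apply Rle_ge, Rmult_le_compat_r; [apply Rlt_le, Rinv_0_lt_compat; lra | lra]. }
    assert (Hr0 : 0 <= e / Q) by lra.
    assert (He : e = (e / Q) * Q) by (field; lra).
    split.
    + rewrite He. apply Rmult_le_pos; lra.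
    + assert (Hup : e / Q <= (INR a - 1) / INR a + 1 / (2 * INR a ^ 2)).
      { eapply Rle_trans; [exact Hi|]. apply Rplus_le_compat_r. unfold Rdiv.
        apply Rmult_le_compat_r; [apply Rlt_le, Rinv_0_lt_compat; lra | lra]. }
      assert (Hup2 : e / Q <= 1 - (2 * INR a - 1) / (2 * INR a * INR a)).
      { replace (1 - (2 * INR a - 1) / (2 * INR a * INR a)) with ((INR a - 1) / INR a + 1 / (2 * INR a ^ 2)) by (field; lra). exact Hup. }
      assert (Hk : Q * ((2 * INR a - 1) / (2 * INR a * INR a)) >= 2 * INR a - 1).
      { apply Rle_ge. replace (2 * INR a - 1) with ((2 * INR a * INR a) * ((2 * INR a - 1) / (2 * INR a * INR a))) at 1 by (field; lra).
        apply Rmult_le_compat_r; [|lra]. apply Rlt_le, Rdiv_lt_0_compat; nra. }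
      rewrite He. nra.
Qed.

Lemma E_gen q F m : basic_sequence q -> infinite_in_limit q -> Q_special q F -> (1 <= m)%nat ->
  0 <= IZR (E_F q F m) <= INR (q m) - 2.
Proof.
  intros Hb Hinf HF Hm. destruct (SQ_exists q m Hm) as (a & b & c & H & <-).
  apply (r_bounds q F a b c Hb Hinf HF H).
Qed.

Lemma q_ge2 q m : basic_sequence q -> (1 <= m)%nat -> 2 <= INR (q m).
Proof. intros Hb Hm. apply (le_INR 2). apply Hb; auto. Qed.

Lemma qprod_pos q n : basic_sequence q -> 0 < qprod q n.
Proof.
  intros Hb. induction n; simpl; [lra|]. pose proof (q_ge2 q (S n) Hb ltac:(lia)). nra.
Qed.

Lemma qprod_geom q n : basic_sequence q -> 2 ^ n <= qprod q n.
Proof.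
  intros Hb. induction n; simpl; [lra|]. pose proof (q_ge2 q (S n) Hb ltac:(lia)).
  pose proof (pow_lt 2 n ltac:(lra)). nra.
Qed.

Fixpoint Sp q F n : R :=
  match n with O => 0 | S n' => Sp q F n' + IZR (E_F q F (S n')) / qprod q (S n') end.

Fixpoint Zi q F n : Z :=
  match n with O => 0%Z | S n' => (Zi q F n' * Z.of_nat (q (S n')) + E_F q F (S n'))%Z end.

Lemma Sp_int q F n : basic_sequence q -> qprod q n * Sp q F n = IZR (Zi q F n).
Proof.
  intros Hb. induction n; simpl; [lra|].
  rewrite plus_IZR, mult_IZR, <- IHn, <- INR_IZR_INZ.
  pose proof (qprod_pos q n Hb). pose proof (q_ge2 q (S n) Hb ltac:(lia)). field. lra.
Qed.

Lemma Sp_sum q F n : sum_n (fun k => IZR (E_F q F (S k)) / qprod q (S k)) n = Sp q F (S n).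
Proof.
  induction n.
  - rewrite sum_O. simpl. lra.
  - rewrite sum_Sn, IHn. simpl (Sp q F (S (S n))). reflexivity.
Qed.

Lemma Sp_lim q F : basic_sequence q -> infinite_in_limit q -> Q_special q F ->
  is_lim_seq (Sp q F) (x_F q F).
Proof.
  intros Hb Hinf HF.
  assert (Hex : ex_series (fun k => IZR (E_F q F (S k)) / qprod q (S k))).
  { apply (@ex_series_le R_AbsRing R_CompleteNormedModule _ (fun k => (1/2) ^ k)).
    - intros k. change (norm (IZR (E_F q F (S k)) / qprod q (S k))) with (Rabs (IZR (E_F q F (S k)) / qprod q (S k))).
      pose proof (E_gen q F (S k) Hb Hinf HF ltac:(lia)).
      pose proof (qprod_pos q k Hb). pose proof (qprod_geom q k Hb).
      pose proof (q_ge2 q (S k) Hb ltac:(lia)).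
      simpl qprod. rewrite Rabs_right.
      + apply Rle_trans with (1 / qprod q k).
        * apply Rle_trans with (INR (q (S k)) / (qprod q k * INR (q (S k)))).
          { unfold Rdiv. apply Rmult_le_compat_r. apply Rlt_le, Rinv_0_lt_compat; nra. lra. }
          right; field; lra.
        * unfold Rdiv. rewrite !Rmult_1_l, pow_inv.
          apply Rinv_le_contravar; [apply pow_lt; lra | lra].
      + apply Rle_ge, Rmult_le_pos; [lra|]. apply Rlt_le, Rinv_0_lt_compat; nra.
    - apply ex_series_geom. rewrite Rabs_right; lra. }
  pose proof (Series_correct _ Hex) as Hs.
  apply is_lim_seq_incr_1. unfold x_F.
  apply is_lim_seq_ext with (u := sum_n (fun k => IZR (E_F q F (S k)) / qprod q (S k))).
  - intros n; apply Sp_sum.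
  - exact Hs.
Qed.

Lemma partial_bound q F n k : basic_sequence q -> infinite_in_limit q -> Q_special q F ->
  0 <= qprod q n * (Sp q F (n + k) - Sp q F n) <= 1 - qprod q n / qprod q (n + k).
Proof.
  intros Hb Hinf HF. pose proof (qprod_pos q n Hb) as Hn. induction k.
  - rewrite Nat.add_0_r. replace (qprod q n / qprod q n) with 1 by (field; lra). lra.
  - rewrite Nat.add_succ_r. simpl (Sp q F (S (n + k))). simpl (qprod q (S (n + k))).
    pose proof (qprod_pos q (n + k) Hb) as Hnk.
    pose proof (E_gen q F (S (n + k)) Hb Hinf HF ltac:(lia)) as HE.
    pose proof (q_ge2 q (S (n + k)) Hb ltac:(lia)) as HQ.
    set (Q := INR (q (S (n + k)))) in *. set (E := IZR (E_F q F (S (n + k)))) in *.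
    set (P := qprod q n / qprod q (n + k)).
    assert (HP : 0 < P) by (apply Rdiv_lt_0_compat; lra).
    replace (qprod q n * (Sp q F (n + k) + E / (qprod q (n + k) * Q) - Sp q F n))
      with (qprod q n * (Sp q F (n + k) - Sp q F n) + P * (E / Q)) by (unfold P; field; lra).
    replace (qprod q n / (qprod q (n + k) * Q)) with (P / Q) by (unfold P; field; lra).
    fold P in IHk.
    assert (0 <= E / Q <= 1 - 1 / Q).
    { split. apply Rdiv_le_0_compat; lra.
      replace (1 - 1 / Q) with ((Q - 1) / Q) by (field; lra). unfold Rdiv.
      apply Rmult_le_compat_r; [apply Rlt_le, Rinv_0_lt_compat; lra| lra]. }
    replace (P / Q) with (P * (1 / Q)) by (field; lra). nra.
Qed.

Definition tl q F n := qprod q n * (x_F q F - Sp q F n).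

Lemma tl_bounds q F n : basic_sequence q -> infinite_in_limit q -> Q_special q F ->
  0 <= tl q F n <= 1.
Proof.
  intros Hb Hinf HF.
  assert (Hl : is_lim_seq (fun k => qprod q n * (Sp q F (k + n) - Sp q F n)) (tl q F n)).
  { unfold tl. apply (is_lim_seq_scal_l _ (qprod q n) (x_F q F - Sp q F n)).
    apply (is_lim_seq_minus' _ _ (x_F q F) (Sp q F n)); [|apply is_lim_seq_const].
    apply (is_lim_seq_incr_n (Sp q F) n). apply Sp_lim; auto. }
  pose proof (qprod_pos q n Hb) as Hpos.
  split.
  - assert (H0 := is_lim_seq_le (fun _ => 0) (fun k => qprod q n * (Sp q F (k + n) - Sp q F n)) 0 (tl q F n)).
    simpl in H0. apply H0; [|apply is_lim_seq_const| exact Hl].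
    intros k. rewrite Nat.add_comm. apply partial_bound; auto.
  - assert (H0 := is_lim_seq_le (fun k => qprod q n * (Sp q F (k + n) - Sp q F n)) (fun _ => 1) (tl q F n) 1).
    simpl in H0. apply H0; [|exact Hl|apply is_lim_seq_const].
    intros k. rewrite Nat.add_comm. pose proof (partial_bound q F n k Hb Hinf HF).
    pose proof (qprod_pos q (n+k) Hb).
    assert (0 <= qprod q n / qprod q (n + k)) by (apply Rdiv_le_0_compat; lra). lra.
Qed.

Lemma tl_rec q F n : basic_sequence q ->
  tl q F n = (IZR (E_F q F (S n)) + tl q F (S n)) / INR (q (S n)).
Proof.
  intros Hb. unfold tl. simpl. pose proof (qprod_pos q n Hb). pose proof (q_ge2 q (S n) Hb ltac:(lia)).
  field. lra.
Qed.

Lemma frac_shift (z : Z) t : 0 <= t < 1 -> frac_part (IZR z + t) = t.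
Proof.
  intros H. unfold frac_part, Int_part.
  rewrite <- (tech_up (IZR z + t) (z + 1)); [| rewrite plus_IZR; lra | rewrite plus_IZR; lra].
  rewrite minus_IZR, plus_IZR. lra.
Qed.

Lemma y_eq q F n : basic_sequence q -> infinite_in_limit q -> Q_special q F ->
  frac_part (qprod q n * x_F q F) = tl q F n.
Proof.
  intros Hb Hinf HF.
  replace (qprod q n * x_F q F) with (IZR (Zi q F n) + tl q F n).
  2:{ unfold tl. rewrite <- Sp_int by auto. ring. }
  apply frac_shift. pose proof (tl_bounds q F n Hb Hinf HF). split; [lra|].
  rewrite tl_rec by auto. pose proof (tl_bounds q F (S n) Hb Hinf HF).
  pose proof (E_gen q F (S n) Hb Hinf HF ltac:(lia)). pose proof (q_ge2 q (S n) Hb ltac:(lia)).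
  apply Rmult_lt_reg_r with (INR (q (S n))); [lra|]. unfold Rdiv. rewrite Rmult_assoc, Rinv_l by lra. lra.
Qed.

Lemma y_bounds q F a b j : basic_sequence q -> infinite_in_limit q -> Q_special q F ->
  in_SQ q a b (S j) ->
  let n := (L_seq q (a - 1) + (b - 1) * a + j)%nat in
  INR j / INR a - 1 / (2 * INR a ^ 2) <= frac_part (qprod q n * x_F q F) <= INR j / INR a + 1 / INR a ^ 2.
Proof.
  intros Hb Hinf HF H n.
  assert (Hn : S n = phiQ q a b (S j)) by (unfold n, phiQ; lia).
  rewrite y_eq, tl_rec by auto.
  pose proof (r_bounds q F a b (S j) Hb Hinf HF H) as [HE Hr]. rewrite <- Hn in HE, Hr.
  replace (S j - 1)%nat with j in Hr by lia.
  pose proof (tl_bounds q F (S n) Hb Hinf HF).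
  pose proof (phi_range q a b (S j) H) as R. rewrite <- Hn in R.
  destruct H as (Ha & _).
  pose proof (q_big q a (S n) Hb Hinf Ha ltac:(lia)) as Hq.
  set (Q := INR (q (S n))) in *. set (E := IZR (E_F q F (S n))) in *.
  set (T := tl q F (S n)) in *.
  assert (Ha' : 1 <= INR a) by (apply (le_INR 1); lia).
  assert (HQ : 2 * INR a ^ 2 <= Q).
  { unfold Q. replace (2 * INR a ^ 2) with (INR (2 * a * a)) by (rewrite !mult_INR; simpl; ring). apply le_INR. lia. }
  assert (HQp : 0 < Q) by nra.
  replace ((E + T) / Q) with (E / Q + T / Q) by (field; lra).
  assert (0 <= T / Q) by (apply Rdiv_le_0_compat; lra).
  assert (T / Q <= 1 / (2 * INR a ^ 2)).
  { apply Rle_trans with (1 / Q). unfold Rdiv. apply Rmult_le_compat_r; [apply Rlt_le, Rinv_0_lt_compat; lra| lra].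
    unfold Rdiv. rewrite !Rmult_1_l. apply Rinv_le_contravar; nra. }
  replace (1 / INR a ^ 2) with (1 / (2 * INR a ^ 2) + 1 / (2 * INR a ^ 2)) by (field; lra).
  lra.
Qed.

Lemma count_step y al be N : INR (count_in y al be (S N)) =
  INR (count_in y al be N) + (if Rle_dec al (y N) then if Rlt_dec (y N) be then 1 else 0 else 0).
Proof.
  simpl. rewrite plus_INR. destruct (Rle_dec al (y N)); [destruct (Rlt_dec (y N) be)|]; simpl; lra.
Qed.

Lemma count_shift y al be s k : count_in y al be (s + k) =
  (count_in y al be s + count_in (fun j => y (s + j)%nat) al be k)%nat.
Proof.
  induction k; [rewrite Nat.add_0_r; simpl; lia|]. rewrite Nat.add_succ_r. simpl. rewrite IHk. lia.
Qed.

Lemma count_le y al be k : (count_in y al be k <= k)%nat.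
Proof.
  induction k; simpl; [lia|].
  destruct (Rle_dec al (y k)); [destruct (Rlt_dec (y k) be)|]; lia.
Qed.

Lemma CL z al be u v k : 0 <= u -> (forall j, (j < k)%nat -> u <= INR j < v -> al <= z j < be) ->
  Rmin v (INR k) - u - 1 <= INR (count_in z al be k).
Proof.
  intros Hu. induction k; intros H.
  - simpl. unfold Rmin. destruct (Rle_dec v 0); lra.
  - rewrite count_step. specialize (IHk (fun j Hj => H j ltac:(lia))).
    rewrite S_INR in *. pose proof (pos_INR (count_in z al be k)). pose proof (pos_INR k).
    assert (Hk : u <= INR k < v -> al <= z k < be) by (apply H; lia).
    destruct (Rle_dec al (z k)); [destruct (Rlt_dec (z k) be)|];
    unfold Rmin in *; destruct (Rle_dec v (INR k)); destruct (Rle_dec v (INR k + 1)); try lra;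
    destruct (Rle_dec u (INR k)); try lra;
    (assert (INR k < v) by lra; specialize (Hk ltac:(lra)); lra).
Qed.

Lemma CU z al be u v k : (forall j, (j < k)%nat -> al <= z j < be -> u <= INR j < v) ->
  INR (count_in z al be k) <= Rmax 0 (Rmin (INR k) (v + 1) - u).
Proof.
  induction k; intros H.
  - simpl. unfold Rmax. destruct (Rle_dec 0 _); lra.
  - rewrite count_step. specialize (IHk (fun j Hj => H j ltac:(lia))).
    rewrite S_INR in *. pose proof (pos_INR (count_in z al be k)). pose proof (pos_INR k).
    assert (Hk : al <= z k < be -> u <= INR k < v) by (apply H; lia).
    destruct (Rle_dec al (z k)); [destruct (Rlt_dec (z k) be)|].
    + specialize (Hk ltac:(lra)).
      unfold Rmin, Rmax in *; destruct (Rle_dec (INR k) (v + 1)); destruct (Rle_dec (INR k + 1) (v + 1)); try lra;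
      destruct (Rle_dec 0 (INR k - u)); destruct (Rle_dec 0 (INR k + 1 - u)); try lra.
    + unfold Rmin, Rmax in *; destruct (Rle_dec (INR k) (v + 1)); destruct (Rle_dec (INR k + 1) (v + 1)); try lra;
      destruct (Rle_dec 0 (INR k - u)); destruct (Rle_dec 0 (INR k + 1 - u)); try lra;
      destruct (Rle_dec 0 (v + 1 - u)); try lra.
    + unfold Rmin, Rmax in *; destruct (Rle_dec (INR k) (v + 1)); destruct (Rle_dec (INR k + 1) (v + 1)); try lra;
      destruct (Rle_dec 0 (INR k - u)); destruct (Rle_dec 0 (INR k + 1 - u)); try lra;
      destruct (Rle_dec 0 (v + 1 - u)); try lra.
Qed.

Lemma round z al be a : 0 <= al -> al < be -> be <= 1 -> (1 <= a)%nat ->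
  (forall j, (j < a)%nat -> INR j / INR a - 1 / (2 * INR a ^ 2) <= z j <= INR j / INR a + 1 / INR a ^ 2) ->
  Rabs (INR (count_in z al be a) - (be - al) * INR a) <= 3.
Proof.
  intros H0 H1 H2 Ha Hz.
  set (A := INR a) in *.
  assert (HA : 1 <= A) by (apply (le_INR 1); exact Ha).
  set (e := 1 / (2 * A ^ 2)).
  assert (He : 1 / A ^ 2 = 2 * e) by (unfold e; field; lra).
  assert (HeA : e * A = 1 / (2 * A)) by (unfold e; field; lra).
  assert (Hinv : 0 < 1 / A <= 1).
  { split. apply Rdiv_lt_0_compat; lra. unfold Rdiv; rewrite Rmult_1_l.
    rewrite <- Rinv_1. apply Rinv_le_contravar; lra. }
  assert (Hinv2 : 1 / (2 * A) = (1 / A) / 2) by (field; lra).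
  assert (Hdiv : forall j : nat, INR j = (INR j / A) * A) by (intros; field; lra).
  assert (Hlo : INR (count_in z al be a) >= (be - al) * A - 3).
  { assert (Hc := CL z al be (A * al + 1 / (2 * A)) (A * be - 1 / A) a).
    fold A in Hc.
    assert (Hm : Rmin (A * be - 1 / A) A = A * be - 1 / A).
    { unfold Rmin. destruct (Rle_dec (A * be - 1 / A) A); nra. }
    rewrite Hm in Hc.
    enough (A * be - 1 / A - (A * al + 1 / (2 * A)) - 1 <= INR (count_in z al be a)) by nra.
    apply Hc.
    - apply Rplus_le_le_0_compat; [nra| lra].
    - intros j Hj [Hu Hv]. specialize (Hz j Hj). rewrite He in Hz. fold e in Hz.
      pose proof (Hdiv j). set (t := INR j / A) in *.
      assert (t >= al + e).
      { assert (t * A >= (al + e) * A) by nra. nra. }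
      assert (t < be - 2 * e).
      { assert (t * A < (be - 2 * e) * A) by nra. nra. }
      lra. }
  assert (Hhi : INR (count_in z al be a) <= (be - al) * A + 3).
  { assert (Hc := CU z al be (A * al - 1 / A) (A * be + 1 / (2 * A)) a).
    fold A in Hc.
    eapply Rle_trans; [apply Hc|].
    - intros j Hj [Hu Hv]. specialize (Hz j Hj). rewrite He in Hz. fold e in Hz.
      pose proof (Hdiv j). set (t := INR j / A) in *.
      assert (t >= al - 2 * e) by lra.
      assert (t < be + e) by lra.
      split; nra.
    - unfold Rmax, Rmin. destruct (Rle_dec A (A * be + 1 / (2 * A) + 1));
      destruct (Rle_dec 0 _); nra. }
  apply Rabs_le. lra.
Qed.

Lemma nat_unbounded r : exists n : nat, r < INR n.
Proof.
  destruct (archimed (Rabs r)) as [H1 _].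
  assert (Hp : (0 < up (Rabs r))%Z). { apply lt_0_IZR. pose proof (Rabs_pos r). lra. }
  exists (Z.to_nat (up (Rabs r))). rewrite INR_IZR_INZ, Z2Nat.id by lia.
  pose proof (Rle_abs r). lra.
Qed.

Fixpoint Rc q i : nat := match i with O => O | S i' => (Rc q i' + l_seq q (S i'))%nat end.

Lemma Rc_mono q i j : (i <= j)%nat -> (Rc q i <= Rc q j)%nat.
Proof. induction 1; simpl; lia. Qed.

Lemma Rc_bound q K a : (K * Rc q a <= K * Rc q K + L_seq q a)%nat.
Proof.
  induction a; simpl; [lia|].
  destruct (le_lt_dec (S a) K).
  - pose proof (Rc_mono q (S a) K l). simpl in H. nia.
  - rewrite L_S. nia.
Qed.

Definition Dv y al be N := INR (count_in y al be N) - (be - al) * INR N.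

Lemma D_shift y al be s k : 0 <= al -> al < be -> be <= 1 ->
  Rabs (Dv y al be (s + k) - Dv y al be s) <= INR k.
Proof.
  intros. unfold Dv. rewrite count_shift, plus_INR, plus_INR.
  pose proof (count_le (fun j => y (s + j)%nat) al be k) as Hc. apply le_INR in Hc.
  pose proof (pos_INR (count_in (fun j => y (s + j)%nat) al be k)). pose proof (pos_INR k).
  apply Rabs_le. nra.
Qed.

Definition HYP q (y : nat -> R) := forall a b j, (1 <= a)%nat -> (1 <= b <= l_seq q a)%nat -> (j < a)%nat ->
  INR j / INR a - 1 / (2 * INR a ^ 2) <= y (L_seq q (a - 1) + (b - 1) * a + j)%nat <= INR j / INR a + 1 / INR a ^ 2.

Lemma round_step q y al be a b' : HYP q y -> 0 <= al -> al < be -> be <= 1 -> (b' < l_seq q (S a))%nat ->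
  Rabs (Dv y al be (L_seq q a + S b' * S a)) <= Rabs (Dv y al be (L_seq q a + b' * S a)) + 3.
Proof.
  intros HY H0 H1 H2 Hb. set (s := (L_seq q a + b' * S a)%nat).
  replace (L_seq q a + S b' * S a)%nat with (s + S a)%nat by (unfold s; lia).
  assert (Hr := round (fun j => y (s + j)%nat) al be (S a) H0 H1 H2 ltac:(lia)).
  assert (Hd : Dv y al be (s + S a) - Dv y al be s =
     INR (count_in (fun j => y (s + j)%nat) al be (S a)) - (be - al) * INR (S a)).
  { unfold Dv. rewrite count_shift, !plus_INR. ring. }
  assert (Rabs (Dv y al be (s + S a) - Dv y al be s) <= 3).
  { rewrite Hd. apply Hr. intros j Hj. 
    assert (E := HY (S a) (S b') j ltac:(lia) ltac:(lia) Hj).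
    replace (L_seq q (S a - 1) + (S b' - 1) * S a + j)%nat with (s + j)%nat in E
      by (unfold s; replace (S a - 1)%nat with a by lia; replace (S b' - 1)%nat with b' by lia; lia).
    exact E. }
  pose proof (Rabs_triang (Dv y al be (s + S a) - Dv y al be s) (Dv y al be s)).
  replace (Dv y al be (s + S a) - Dv y al be s + Dv y al be s) with (Dv y al be (s + S a)) in H3 by ring.
  lra.
Qed.

Lemma inner q y al be a : HYP q y -> 0 <= al -> al < be -> be <= 1 ->
  Rabs (Dv y al be (L_seq q a)) <= 3 * INR (Rc q a) ->
  forall b', (b' <= l_seq q (S a))%nat ->
  Rabs (Dv y al be (L_seq q a + b' * S a)) <= 3 * INR (Rc q a + b').
Proof.
  intros HY H0 H1 H2 Hs. induction b' as [|b' IH]; intros Hb.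
  - rewrite Nat.mul_0_l, !Nat.add_0_r. exact Hs.
  - eapply Rle_trans; [apply round_step; auto; lia|].
    specialize (IH ltac:(lia)). rewrite Nat.add_succ_r, S_INR. lra.
Qed.

Lemma block q y al be a : HYP q y -> 0 <= al -> al < be -> be <= 1 ->
  Rabs (Dv y al be (L_seq q a)) <= 3 * INR (Rc q a).
Proof.
  intros HY H0 H1 H2. induction a as [|a IH].
  - rewrite L_0. unfold Dv. simpl. replace (0 - (be - al) * 0) with 0 by ring. rewrite Rabs_R0. lra.
  - rewrite L_S. rewrite Nat.mul_comm. simpl (Rc q (S a)).
    apply inner; auto.
Qed.

Lemma position q N : exists a b k, (1 <= b <= l_seq q (S a))%nat /\ (k < S a)%nat /\
  N = (L_seq q a + (b - 1) * S a + k)%nat.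
Proof.
  destruct (SQ_exists q (S N) ltac:(lia)) as (a & b & c & H & E).
  unfold in_SQ, phiQ in *. destruct a as [|a]; [lia|].
  exists a, b, (c - 1)%nat. replace (S a - 1)%nat with a in E by lia. lia.
Qed.

Lemma Kbound q K a b n k : (1 <= b <= l_seq q (S a))%nat -> n = (L_seq q a + (b - 1) * S a + k)%nat ->
  (K * (Rc q a + (b - 1)) <= K * Rc q K + n)%nat.
Proof.
  intros Hb En. destruct (le_lt_dec (S a) K).
  - pose proof (Rc_mono q (S a) K l). simpl in H. nia.
  - pose proof (Rc_bound q K a). nia.
Qed.

Lemma kbound q a n k e : 0 < e -> (k < S a)%nat -> (L_seq q a <= n)%nat ->
  INR k <= 2 / e + e * INR n.
Proof.
  intros He Hk Hn. pose proof (L_ge q a) as HL.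
  assert (Hn2 : INR a * (INR a + 1) <= 2 * INR n).
  { replace (INR a * (INR a + 1)) with (INR (a * (a + 1))) by (rewrite mult_INR, plus_INR; simpl; ring).
    replace (2 * INR n) with (INR (2 * n)) by (rewrite mult_INR; simpl; ring). apply le_INR. lia. }
  assert (Hka : INR k <= INR a) by (apply le_INR; lia).
  pose proof (pos_INR a). pose proof (pos_INR n).
  assert (H2e : 0 < 2 / e) by (apply Rdiv_lt_0_compat; lra).
  destruct (Rle_dec (INR a) (2 / e)).
  - nra.
  - assert (e * INR a > 2) by (apply Rnot_le_lt in n0; replace 2 with (e * (2 / e)) by (field; lra); nra).
    nra.
Qed.

Lemma ud q y : HYP q y -> uniformly_distributed y.
Proof.
  intros HY al be H0 H1 H2. apply is_lim_seq_spec. intros eps.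
  pose proof (cond_pos eps) as Heps. set (e := pos eps) in *.
  destruct (nat_unbounded (9 / e)) as [K HK].
  assert (H9 : 0 < 9 / e) by (apply Rdiv_lt_0_compat; lra).
  assert (HK3 : 3 / INR K < e / 3).
  { apply Rmult_lt_reg_r with (INR K); [lra|]. unfold Rdiv at 1. rewrite Rmult_assoc, Rinv_l by lra.
    replace 9 with (3 * 3) in HK by ring.
    assert (e * INR K > 9) by (replace 9 with (e * (9 / e)) by (field; lra); nra). nra. }
  set (C := 3 * INR (Rc q K) + 6 / e).
  assert (HC0 : 0 <= C) by (unfold C; pose proof (pos_INR (Rc q K)); assert (0 < 6/e) by (apply Rdiv_lt_0_compat; lra); lra).
  destruct (nat_unbounded (3 * C / e)) as [N0 HN0].
  exists (S N0). intros n Hn.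
  assert (Hnr : INR N0 < INR n) by (apply lt_INR; lia).
  assert (Hnp : 0 < INR n) by (pose proof (pos_INR N0); lra).
  destruct (position q n) as (a & b & k & Hb & Hk & En).
  set (s := (L_seq q a + (b - 1) * S a)%nat).
  assert (Hs : Rabs (Dv y al be s) <= 3 * INR (Rc q a + (b - 1))).
  { unfold s. apply inner; auto. apply block; auto. lia. }
  assert (Hsh : Rabs (Dv y al be n) <= Rabs (Dv y al be s) + INR k).
  { rewrite En. fold s. pose proof (D_shift y al be s k H0 H1 H2).
    pose proof (Rabs_triang (Dv y al be (s + k) - Dv y al be s) (Dv y al be s)).
    replace (Dv y al be (s + k) - Dv y al be s + Dv y al be s) with (Dv y al be (s + k)) in H3 by ring. lra. }
  assert (HKb : INR K * INR (Rc q a + (b - 1)) <= INR K * INR (Rc q K) + INR n).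
  { rewrite <- !mult_INR, <- plus_INR. apply le_INR. eapply Kbound; eauto. }
  assert (HR : INR (Rc q a + (b - 1)) <= INR (Rc q K) + INR n / INR K).
  { apply Rmult_le_reg_l with (INR K); [lra|]. rewrite Rmult_plus_distr_l.
    replace (INR K * (INR n / INR K)) with (INR n) by (field; lra). exact HKb. }
  assert (Hkb : INR k <= 2 / (e / 3) + (e / 3) * INR n).
  { apply (kbound q a n k); [lra|lia|]. clear -En. nia. }
  replace (2 / (e / 3)) with (6 / e) in Hkb by (field; lra).
  assert (HnK : 3 * (INR n / INR K) = (3 / INR K) * INR n) by (field; lra).
  assert (HD : Rabs (Dv y al be n) < e * INR n).
  { assert (3 * C / e < INR n) by lra.
    assert (C < e / 3 * INR n).
    { apply Rmult_lt_reg_l with (3 / e). apply Rdiv_lt_0_compat; lra.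
      replace (3 / e * C) with (3 * C / e) by (field; lra).
      replace (3 / e * (e / 3 * INR n)) with (INR n) by (field; lra). lra. }
    unfold C in *. nra. }
  unfold Dv in HD.
  replace (INR (count_in y al be n) / INR n - (be - al)) with
    ((INR (count_in y al be n) - (be - al) * INR n) / INR n) by (field; lra).
  unfold Rdiv. rewrite Rabs_mult, Rabs_inv, (Rabs_right (INR n)) by lra.
  apply Rmult_lt_reg_r with (INR n); [lra|]. rewrite Rmult_assoc, Rinv_l by lra. lra.
Qed.

Theorem mainTheorem1 (q : nat -> nat) (F : nat -> nat -> nat -> Z) :
  basic_sequence q -> infinite_in_limit q -> Q_special q F ->
  Q_distribution_normal q (x_F q F).
Proof.
  intros Hb Hinf HF. unfold Q_distribution_normal. apply (ud q).
  intros a b j Ha Hbl Hj.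
  apply (y_bounds q F a b j Hb Hinf HF). unfold in_SQ. lia.
Qed.
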